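(* Let $\mathcal T$ be a transducer with $n\ge1$ states. If $\mathcal T$ is zero-avoiding with minimum bound $k$, then $k<n$.
   Context: A transducer is a quintuple $\mathcal T=(Q,\Sigma,E,I,F)$ with finite state set $Q$, finite alphabet $\Sigma$, finite transition set $E\subseteq Q\times\{x/y : x,y\in\Sigma\cup\{\lambda\}\}\times Q$ ($\lambda$ the empty word), nonempty initial set $I\subseteq Q$, final set $F\subseteq Q$. A path is a finite sequence of consecutive transitions; its label $x_1\cdots x_\ell/y_1\cdots y_\ell$ is formed by concatenating input parts and output parts. A computation is a path that is empty or starts at an initial state. For a path $P$ with label $u/v$, the length discrepancy is $d(P)=|u|-|v|$, and $d_{max}(P)=\max\{|d(Q)| : Q\text{ a prefix of }P\}$ (prefixes being initial segments of transitions, including the empty path). $\mathcal T$ is zero-avoiding with bound $k\in\mathbb N_0$ if for every computation $P$ of $\mathcal T$, $d_{max}(P)>k$ implies $d(P)\neq 0$. It is zero-avoiding with minimum bound $k$ if it is zero-avoiding with bound $k$ but not with bound $k-1$. *)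

(* Defs.v *)
From HB Require Import structures.
From mathcomp Require Import all_boot all_order all_algebra.
Set Implicit Arguments. Unset Strict Implicit. Unset Printing Implicit Defensive.
Import Order.TTheory GRing.Theory Num.Theory.

(* A label x/y with x,y in S ∪ {λ} is encoded as (x, y) : option S * option S,
   with None standing for the empty word λ. *)
Definition transition (Q S : finType) := (Q * (option S * option S) * Q)%type.

Record transducer (Q S : finType) := Transducer {
  trans : {set transition Q S};
  init  : {set Q};
  final : {set Q}
}.

Section Paths.
Variables (Q S : finType) (T : transducer Q S).

Definition src (e : transition Q S) : Q := e.1.1.
Definition tgt (e : transition Q S) : Q := e.2.
Definition lbl_in (e : transition Q S) : option S := e.1.2.1.
Definition lbl_out (e : transition Q S) : option S := e.1.2.2.

Definition is_path (p : seq (transition Q S)) : bool :=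
  all (fun e => e \in trans T) p && sorted (fun e1 e2 => tgt e1 == src e2) p.

Definition is_computation (p : seq (transition Q S)) : bool :=
  is_path p && (if p is e :: _ then src e \in init T else true).

Definition disc (p : seq (transition Q S)) : int :=
  (\sum_(e <- p) ((lbl_in e != None)%:Z - (lbl_out e != None)%:Z))%R.

Definition dmax (p : seq (transition Q S)) : nat :=
  \max_(i < (size p).+1) `|disc (take i p)|%N.

(* zero-avoiding with bound k (k an integer, so that "bound k-1" makes sense for k = 0) *)
Definition zero_avoiding (k : int) : Prop :=
  forall p, is_computation p -> (k < (dmax p)%:Z)%R -> disc p != 0%R.

Definition zero_avoiding_min (k : nat) : Prop :=
  zero_avoiding k%:Z /\ ~ zero_avoiding (k%:Z - 1)%R.

End Paths.

(* Main.v *)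
Require Import Defs.
From mathcomp Require Import all_boot all_order all_algebra zify.
From Stdlib Require Import Classical.
Import Order.TTheory GRing.Theory Num.Theory.
Local Open Scope ring_scope.
Set Implicit Arguments. Unset Strict Implicit.
From mathcomp Require Import ring.

Fixpoint pth (Q S : finType) (T : transducer Q S) (q : Q) (p : seq (transition Q S)) : bool :=
  match p with
  | [::] => true
  | e :: p' => [&& e \in trans T, src e == q & pth T (tgt e) p']
  end.
Arguments pth {Q S}.

Definition endst (Q S : finType) (q : Q) (p : seq (transition Q S)) : Q := last q (map (@tgt Q S) p).

Lemma pth_path (Q S : finType) (T : transducer Q S) (p : seq (transition Q S)) e q :
  pth T q (e :: p) = (src e == q) && is_path T (e :: p).
Proof.
elim: p e q => [|e' p IH] e q /=.
  by rewrite /is_path /= andbT; case: (_ \in _); case: (_ == _).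
move: (IH e' (tgt e)) => /= ->; rewrite /is_path /= [src e' == _]eq_sym.
by case: (e \in trans T); case: (_ == q); case: (tgt e == _); case: (e' \in _);
  case: (all _ _); case: (path _ _ _).
Qed.

Lemma comp_pth (Q S : finType) (T : transducer Q S) p :
  init T != set0 -> is_computation T p -> exists2 q, q \in init T & pth T q p.
Proof.
move=> /set0Pn [q0 hq0]; case: p => [|e p]; first by exists q0.
rewrite /is_computation => /andP [hp hs]; exists (src e) => //.
by rewrite pth_path eqxx.
Qed.

Lemma pth_comp (Q S : finType) (T : transducer Q S) p q :
  q \in init T -> pth T q p -> is_computation T p.
Proof.
case: p => [|e p] hq; first by rewrite /is_computation /is_path.
rewrite pth_path => /andP [/eqP he hp]; rewrite /is_computation hp /= he //.
Qed.

Lemma endst_cat (Q S : finType) (q : Q) (p1 p2 : seq (transition Q S)) :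
  endst q (p1 ++ p2) = endst (endst q p1) p2.
Proof. by rewrite /endst map_cat last_cat. Qed.

Lemma pth_cat (Q S : finType) (T : transducer Q S) q p1 p2 :
  pth T q (p1 ++ p2) = pth T q p1 && pth T (endst q p1) p2.
Proof.
elim: p1 q => [|e p1 IH] q //=.
by rewrite IH /endst /= !andbA.
Qed.

Lemma pth_catI (Q S : finType) (T : transducer Q S) q q' p1 p2 :
  pth T q p1 -> endst q p1 = q' -> pth T q' p2 -> pth T q (p1 ++ p2).
Proof. by move=> h1 <- h2; rewrite pth_cat h1 h2. Qed.

Lemma pth_rep (Q S : finType) (T : transducer Q S) q L r :
  pth T q L -> endst q L = q -> pth T q (flatten (nseq r L)) && (endst q (flatten (nseq r L)) == q).
Proof.
move=> hL hE; elim: r => [|r IH] /=; first by rewrite eqxx.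
case/andP: IH => h1 /eqP h2.
by rewrite pth_cat endst_cat hE hL h1 h2 eqxx.
Qed.

Lemma disc_cat (Q S : finType) (p1 p2 : seq (transition Q S)) :
  disc (p1 ++ p2) = disc p1 + disc p2.
Proof. by rewrite /disc big_cat. Qed.

Lemma disc_rep (Q S : finType) (L : seq (transition Q S)) r :
  disc (flatten (nseq r L)) = r%:Z * disc L.
Proof.
elim: r => [|r IH] /=; first by rewrite /disc big_nil mul0r.
by rewrite disc_cat IH -addn1 PoszD mulrDl mul1r addrC.
Qed.

Lemma disc_nil (Q S : finType) : disc ([::] : seq (transition Q S)) = 0.
Proof. by rewrite /disc big_nil. Qed.

Lemma disc_step (Q S : finType) (P : seq (transition Q S)) i :
  -1 <= disc (take i.+1 P) - disc (take i P) <= 1.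
Proof.
case: (ltnP i (size P)) => hi.
  case: P hi => [//|x P'] hi.
  rewrite (take_nth x hi) -cats1 disc_cat /disc big_cons big_nil addr0.
  case: (lbl_in _ != None); case: (lbl_out _ != None) => /=; lia.
rewrite !take_oversize //; last by apply: leqW.
lia.
Qed.

Lemma take_seg (T : Type) (P : seq T) i j :
  (i <= j)%N -> take j P = take i P ++ drop i (take j P).
Proof. by move=> hij; rewrite -{1}(cat_take_drop i (take j P)) take_takel. Qed.

Lemma seg_split (T : Type) (P : seq T) i j k :
  (i <= j)%N -> (j <= k)%N -> (k <= size P)%N ->
  drop i (take k P) = drop i (take j P) ++ drop j (take k P).
Proof.
move=> hij hjk hk.
have hs : size (take j P) = j by rewrite size_takel // (leq_trans hjk hk).
rewrite {1}(take_seg P hjk) drop_cat hs; case: ltnP => h //.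
have e : i = j by apply/eqP; rewrite eqn_leq hij h.
by subst i; rewrite subnn drop0 (drop_oversize (s := take j P)) ?hs.
Qed.

Lemma pth_take (Q S : finType) (T : transducer Q S) q P i :
  pth T q P -> pth T q (take i P).
Proof. by rewrite -{1}(cat_take_drop i P) pth_cat => /andP []. Qed.

Lemma pth_seg (Q S : finType) (T : transducer Q S) q P i j :
  pth T q P -> (i <= j)%N ->
  pth T (endst q (take i P)) (drop i (take j P)) &&
  (endst (endst q (take i P)) (drop i (take j P)) == endst q (take j P)).
Proof.
move=> hP hij; have := pth_take j hP; rewrite {1}(take_seg P hij) pth_cat => /andP [_ ->].
by rewrite [in X in _ == X](take_seg P hij) endst_cat eqxx.
Qed.
Lemma ivt (g : nat -> int) (m : nat) (j : int) :
  g 0%N = 0 -> (forall i, g i.+1 - g i <= 1) -> 0 <= j <= g m ->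
  exists2 i, (i <= m)%N & g i = j.
Proof.
move=> g0 st; elim: m => [|m IH] hj.
  by exists 0%N => //; rewrite g0 in hj; lia.
have := st m; case: (lerP j (g m)) => hjm hs.
  have [i hi <-] : exists2 i, (i <= m)%N & g i = j by apply: IH; lia.
  by exists i => //; lia.
by exists m.+1 => //; lia.
Qed.

Lemma pumpA (Q : finType) (g : nat -> int) (st : nat -> Q) (m : nat) :
  g 0%N = 0 -> (forall i, g i.+1 - g i <= 1) -> (#|Q|%:Z <= g m) ->
  exists a b, [/\ (a < b)%N, (b <= m)%N, st a = st b & g a < g b].
Proof.
move=> g0 st1 hm.
pose t (j : nat) := find (fun i => g i == j%:Z) (iota 0 m.+1).
have Ht : forall j, (j <= #|Q|)%N -> (t j <= m)%N /\ g (t j) = j%:Z.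
  move=> j hj.
  have [i hi gi] := @ivt g m (j%:Z) g0 st1 ltac:(lia).
  have hh : has (fun i => g i == j%:Z) (iota 0 m.+1).
    by apply/hasP; exists i; [rewrite mem_iota; lia | apply/eqP].
  have := nth_find 0%N hh; rewrite has_find size_iota in hh.
  rewrite nth_iota // add0n => /eqP; split => //; lia.
have Hmin : forall j i, (i < t j)%N -> g i != j%:Z.
  move=> j i hi; have := before_find 0%N hi.
  have : (t j <= m.+1)%N by have := find_size (fun i => g i == j%:Z) (iota 0 m.+1); rewrite size_iota.
  by move=> htj; rewrite nth_iota ?add0n //; [move=> ->| lia].
have Hmono : forall j1 j2, (j1 < j2)%N -> (j2 <= #|Q|)%N -> (t j1 < t j2)%N.
  move=> j1 j2 h12 h2.
  have [h2m g2] := Ht _ h2.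
  have [i hi gi] := @ivt g (t j2) (j1%:Z) g0 st1 ltac:(lia).
  have [h1m g1] := Ht j1 ltac:(lia).
  case: (ltnP i (t j1)) => hij.
    by have := Hmin _ _ hij; rewrite gi eqxx.
  have : t j1 != t j2 by apply/eqP => e; move: g1; rewrite e g2; lia.
  lia.
pose F (j : 'I_#|Q|.+1) := st (t j).
have : ~ injective F.
  by move=> /leq_card; rewrite card_ord ltnn.
rewrite /injective => /not_all_ex_not [j1] /not_all_ex_not [j2].
move=> H; have [hF hne] := imply_to_and _ _ H.
have hne' : nat_of_ord j1 <> nat_of_ord j2 by move=> e; apply: hne; apply: val_inj.
have hj1 := ltn_ord j1; have hj2 := ltn_ord j2.
case: (ltngtP j1 j2) => h; last by [].
- exists (t j1), (t j2); have [? g1] := Ht j1 ltac:(lia); have [? g2] := Ht j2 ltac:(lia).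
  split => //; try exact: Hmono; try lia; rewrite ?g1 ?g2; lia.
- exists (t j2), (t j1); have [? g1] := Ht j1 ltac:(lia); have [? g2] := Ht j2 ltac:(lia).
  split => //; try exact: Hmono; try lia; rewrite ?g1 ?g2; lia.
Qed.

Local Close Scope ring_scope.
Theorem proposition2 (Q S : finType) (T : transducer Q S) (k : nat) :
  init T != set0 -> 0 < #|Q| ->
  zero_avoiding_min T k -> k < #|Q|.
Proof.
Local Open Scope ring_scope.
move=> hI hQ [zk nz].
case: (ltnP k #|Q|) => // hk; exfalso.
have [P [hc hd hz]] : exists P, [/\ is_computation T P, (k%:Z - 1 < (dmax P)%:Z) & disc P = 0].
  apply: NNPP => H; apply: nz => P hc hd; apply/negP => /eqP hz; by apply: H; exists P; split.
have hkd : (k <= dmax P)%N by lia.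
have [q0 hq0 hpP] := comp_pth hI hc.
pose N := size P.
pose f i := disc (take i P).
have [m hmN hm] : exists2 m, (m <= N)%N & (k <= `|f m|)%N.
  apply: NNPP => H; move: hkd; rewrite leqNgt => /negP; apply.
  apply: (@leq_ltn_trans k.-1); last by lia.
  apply/bigmax_leqP => i _.
  case: (leqP k (`|f i|%N)) => h; last by rewrite /f in h; lia.
  by exfalso; apply: H; exists i => //; rewrite -ltnS ltn_ord.
pose g i := if 0 <= f m then f i else - f i.
have g0 : g 0%N = 0 by rewrite /g /f take0 disc_nil; case: ifP => _; lia.
have gst : forall i, -1 <= g i.+1 - g i <= 1.
  by move=> i; have := disc_step P i; rewrite /g /f; case: ifP => _; lia.
have gm : g m = `|f m|%N :> int by rewrite /g; case: ifP => hf; lia.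
have fN : f N = 0 by rewrite /f take_size.
have gN : g N = 0 by rewrite /g fN; case: ifP => _; lia.
pose st i := endst q0 (take i P).
have [a1 [b1 [hab1 hb1m hst1 hg1]]] : exists a b, [/\ (a < b)%N, (b <= m)%N, st a = st b & g a < g b].
  apply: pumpA => // [i|]; [by have := gst i; lia | lia].
pose h i := g (N - i)%N.
have [a [b [hab hbm hst2 hg2]]] : exists a b, [/\ (a < b)%N, (b <= N - m)%N, st (N - a)%N = st (N - b)%N & h a < h b].
  apply: pumpA.
  - by rewrite /h subn0.
  - move=> i; rewrite /h; case: (ltnP i N) => hi.
      have -> : (N - i = (N - i.+1).+1)%N by lia.
      by have := gst (N - i.+1)%N; lia.
    have -> : (N - i = 0)%N by lia.
    have -> : (N - i.+1 = 0)%N by lia.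
    lia.
  - by rewrite /h subKn // gm; lia.
pose a2 := (N - b)%N; pose b2 := (N - a)%N.
have ha2 : (m <= a2)%N by rewrite /a2; lia.
have hab2 : (a2 < b2)%N by rewrite /a2 /b2; lia.
have hb2 : (b2 <= N)%N by rewrite /b2; lia.
have hg2' : g b2 < g a2 by [].
pose L1 := drop a1 (take b1 P); pose L2 := drop a2 (take b2 P).
pose r1 := `|g b1 - g a1|%N; pose r2 := `|g a2 - g b2|%N.
have er1 : r1%:Z = g b1 - g a1 by rewrite /r1; lia.
have er2 : r2%:Z = g a2 - g b2 by rewrite /r2; lia.
pose X := take a1 P ++ flatten (nseq r2 L1) ++ drop a1 (take m P).
pose Y := drop m (take a2 P) ++ flatten (nseq r1 L2) ++ drop a2 P.
pose P' := take a1 P ++ flatten (nseq r2 L1) ++ drop a1 (take a2 P) ++ flatten (nseq r1 L2) ++ drop a2 P.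
have hPXY : P' = X ++ Y.
  by rewrite /P' /X /Y (@seg_split _ P a1 m a2 (leq_trans (ltnW hab1) hb1m) ha2 (leq_trans (ltnW hab2) hb2)) -!catA.
have ha1a2 : (a1 <= a2)%N by lia.
have hcP' : is_computation T P'.
  apply: (pth_comp hq0).
  have /andP [hL1 /eqP eL1] := pth_seg hpP (ltnW hab1).
  have /andP [hM /eqP eM] := pth_seg hpP ha1a2.
  have /andP [hL2 /eqP eL2] := pth_seg hpP (ltnW hab2).
  have /andP [hR /eqP eR] := pth_seg hpP (ltnW (leq_trans hab2 hb2)).
  rewrite take_size in hR eR.
  have /andP [hL1r /eqP eL1r] := pth_rep r2 hL1 (etrans eL1 (esym hst1)).
  have /andP [hL2r /eqP eL2r] := pth_rep r1 hL2 (etrans eL2 hst2).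
  apply: (pth_catI (q' := st a1)); [exact: pth_take | by [] | ].
  apply: (pth_catI (q' := st a1)); [exact: hL1r | exact: eL1r | ].
  apply: (pth_catI (q' := st a2)); [exact: hM | exact: eM | ].
  apply: (pth_catI (q' := st a2)); [exact: hL2r | exact: eL2r | ].
  exact: hR.
have dL1 : disc L1 = f b1 - f a1.
  by rewrite /f (take_seg P (ltnW hab1)) disc_cat -/L1; lia.
have dL2 : disc L2 = f b2 - f a2.
  by rewrite /f [take b2 P](take_seg P (ltnW hab2)) disc_cat -/L2; lia.
have dM : disc (drop a1 (take a2 P)) = f a2 - f a1.
  by rewrite /f [in X in _ = X - _](take_seg P ha1a2) disc_cat; lia.
have dM1 : disc (drop a1 (take m P)) = f m - f a1.
  by rewrite /f [in X in _ = X - _](take_seg P (leq_trans (ltnW hab1) hb1m)) disc_cat; lia.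
have dR : disc (drop a2 P) = f N - f a2.
  by rewrite /f [in X in _ = X - _](take_seg P (ltnW (leq_trans hab2 hb2))) disc_cat /N take_size; lia.
have hd0 : disc P' = 0.
  rewrite /P' !disc_cat !disc_rep dL1 dL2 dM dR er1 er2 fN -/(f a1).
  by rewrite /g; case: ifP => _; ring.
have hX : (k < `|disc X|)%N.
  rewrite /X !disc_cat disc_rep dL1 dM1 er2 -/(f a1).
  move: hg1 hg2' hm; rewrite /g; case: ifP => hf hg1 hg2' hm.
    have : 1 <= (f a2 - f b2) * (f b1 - f a1) by nia.
    lia.
  have : 1 <= (- f a2 - - f b2) * (- f b1 - - f a1) by nia.
  have -> : (- f a2 - - f b2) * (- f b1 - - f a1) = (f a2 - f b2) * (f b1 - f a1) by ring.
  move=> hpr.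
  have e : (- f a2 - - f b2) * (f b1 - f a1) = - ((f a2 - f b2) * (f b1 - f a1)) by ring.
  rewrite e; lia.
have hdm : (k < dmax P')%N.
  apply: (leq_trans hX).
  have hsz : (size X < (size P').+1)%N by rewrite ltnS hPXY size_cat leq_addr.
  have := @leq_bigmax _ (fun i : 'I_(size P').+1 => `|disc (take i P')|%N) (Ordinal hsz).
  move=> H; rewrite /dmax; apply: leq_trans H; rewrite /= hPXY take_size_cat //.
have := zk P' hcP' ltac:(lia).
by rewrite hd0 eqxx.
Qed.
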